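(* For every $n\ge2$, every $K_n$-treelike graph is $\mathcal{C}$-$\mathrm{HH}$.
   Context: Graphs are simple; subgraphs are induced. A homomorphism maps edges to edges. A graph $G$ is $\mathcal{C}$-$\mathrm{HH}$ if every homomorphism from a finite connected induced subgraph of $G$ into $G$ extends to a homomorphism $G\to G$. For $n\ge2$, a $K_n$-treelike graph is a finite connected graph whose vertex set is covered by a family of $n$-element vertex sets (components), each inducing $K_n$, such that every edge lies inside some component, two distinct components share at most one vertex, and every induced cycle has all its vertices inside a single component. *)

(* Defs.v *)
From mathcomp Require Import all_boot.
Set Implicit Arguments. Unset Strict Implicit. Unset Printing Implicit Defensive.

Definition simple_graph (T : finType) (e : rel T) : Prop :=
  symmetric e /\ irreflexive e.

Definition induced_rel (T : finType) (e : rel T) (A : {set T}) : rel T :=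
  [rel x y | [&& x \in A, y \in A & e x y]].

Definition induced_connected (T : finType) (e : rel T) (A : {set T}) : Prop :=
  A != set0 /\
  forall x y, x \in A -> y \in A -> connect (induced_rel e A) x y.

Definition graph_connected (T : finType) (e : rel T) : Prop :=
  induced_connected e [set: T].

Definition hom_on (T : finType) (e : rel T) (A : {set T}) (f : T -> T) : Prop :=
  forall x y, x \in A -> y \in A -> e x y -> e (f x) (f y).

Definition graph_hom (T : finType) (e : rel T) (f : T -> T) : Prop :=
  forall x y, e x y -> e (f x) (f y).

Definition C_HH (T : finType) (e : rel T) : Prop :=
  forall (A : {set T}) (f : T -> T),
    induced_connected e A -> hom_on e A f ->
    exists g : T -> T, graph_hom e g /\ {in A, forall x, g x = f x}.

Definition clique (T : finType) (e : rel T) (A : {set T}) : Prop :=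
  forall x y, x \in A -> y \in A -> x != y -> e x y.

(* C is the vertex set of an induced cycle: the induced subgraph G[C] is a
   cycle graph, i.e. it has at least 3 vertices, is connected and
   2-regular. *)
Definition induced_cycle (T : finType) (e : rel T) (C : {set T}) : Prop :=
  3 <= #|C| /\ induced_connected e C /\
  forall x, x \in C -> #|[set y in C | e x y]| = 2.

(* K_n-treelike graph, with F the family of components. *)
Definition Kn_treelike (n : nat) (T : finType) (e : rel T) : Prop :=
  simple_graph e /\ graph_connected e /\
  exists F : {set {set T}},
    (forall x : T, exists2 K, K \in F & x \in K) /\
    (forall K, K \in F -> #|K| = n /\ clique e K) /\
    (forall x y, e x y -> exists2 K, K \in F & (x \in K) && (y \in K)) /\
    (forall K1 K2, K1 \in F -> K2 \in F -> K1 != K2 -> #|K1 :&: K2| <= 1) /\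
    (forall C, induced_cycle e C -> exists2 K, K \in F & C \subset K).

(* Main.v *)
Require Import Defs.
From mathcomp Require Import all_boot zify.
Set Implicit Arguments. Unset Strict Implicit. Unset Printing Implicit Defensive.

Lemma cycle_induced (T : finType) (e : rel T) (c : nat -> T) (m : nat) :
  symmetric e -> irreflexive e -> 3 <= m ->
  (forall i j, i < m -> j < m -> c i = c j -> i = j) ->
  (forall i, i.+1 < m -> e (c i) (c i.+1)) ->
  e (c m.-1) (c 0) ->
  (forall i j, i < m -> j < m -> e (c i) (c j) ->
     j = i.+1 \/ i = j.+1 \/ (i = 0 /\ j = m.-1) \/ (j = 0 /\ i = m.-1)) ->
  induced_cycle e [set c (nat_of_ord i) | i : 'I_m].
Proof.
move=> sym irr m3 inj ed edl adj.
set C := [set c (nat_of_ord i) | i : 'I_m].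
have inC : forall i, i < m -> c i \in C.
  by move=> i im; apply/imsetP; exists (Ordinal im).
have CP : forall x, x \in C -> exists2 i, i < m & x = c i.
  by move=> x /imsetP [i _ ->]; exists i.
split.
  rewrite card_imset ?cardsT ?card_ord //.
  by move=> i j /inj; move=> h; apply/val_inj/h.
split.
  split; first by apply/set0Pn; exists (c 0); apply: inC; lia.
  have fw : forall i j, i <= j -> j < m -> connect (induced_rel e C) (c i) (c j).
    move=> i j ij jm; elim: j ij jm => [|j IH] ij jm.
      by have -> : i = 0 by lia.
    case: (ltnP i j.+1) => h.
      apply: (connect_trans (IH _ _)); try lia.
      apply: connect1; rewrite /induced_rel /= !inC ?ed //; lia.
    by have -> : i = j.+1 by lia.
  move=> x y /CP [i im ->] /CP [j jm ->].
  apply: (connect_trans (fw i m.-1 _ _)); try lia.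
  apply: (connect_trans (y := c 0)); last by apply: fw; lia.
  apply: connect1; rewrite /induced_rel /= !inC ?edl //; lia.
move=> x /CP [i im ->].
set s := if i.+1 == m then 0 else i.+1.
set p := if i == 0 then m.-1 else i.-1.
have sm : s < m by rewrite /s; case: ifP => /eqP; lia.
have pm : p < m by rewrite /p; case: ifP => /eqP; lia.
have -> : [set y in C | e (c i) y] = [set c s; c p].
  apply/setP => y; rewrite !inE; apply/andP/orP.
    case=> /CP [j jm ->] /(adj _ _ im jm) H.
    have : j = s \/ j = p by rewrite /s /p; case: ifP => /eqP; case: ifP => /eqP; lia.
    by case=> ->; [left|right].
  case=> /eqP ->; (split; first by apply: inC).
    rewrite /s; case: ifP => /eqP h.
      by have -> : i = m.-1 by lia.
    by apply: ed; lia.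
  rewrite /p; case: ifP => /eqP h.
    by rewrite h sym.
  rewrite sym; have -> : i = i.-1.+1 by lia.
  by apply: ed; lia.
rewrite cards2; suff -> : c s != c p by [].
apply/eqP => /(inj _ _ sm pm); rewrite /s /p; case: ifP => /eqP; case: ifP => /eqP; lia.
Qed.

Lemma triangle_in (T : finType) (e : rel T) (x y z : T) :
  symmetric e -> irreflexive e -> e x y -> e y z -> e x z ->
  exists C, [/\ induced_cycle e C, x \in C, y \in C & z \in C].
Proof.
move=> sym irr exy eyz exz.
have nxy : x != y by apply/eqP => h; move: exy; rewrite h irr.
have nyz : y != z by apply/eqP => h; move: eyz; rewrite h irr.
have nxz : x != z by apply/eqP => h; move: exz; rewrite h irr.
pose c i := if i == 0 then x else if i == 1 then y else z.
exists [set c (nat_of_ord i) | i : 'I_3]; split.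
- apply: cycle_induced => //.
  + move=> i j i3 j3; rewrite /c.
    case: i i3 => [|[|[|i]]] //; case: j j3 => [|[|[|j]]] //= _ _ h;
      first [done | by move: nxy; rewrite h eqxx | by move: nyz; rewrite h eqxx
         | by move: nxz; rewrite h eqxx | by move: nxy; rewrite -h eqxx
         | by move: nyz; rewrite -h eqxx | by move: nxz; rewrite -h eqxx].
  + by move=> i i3; rewrite /c; case: i i3 => [|[|]] //.
  + by rewrite /c /= sym.
  + move=> i j i3 j3; case: (eqVneq i j) => [->|ne]; [by rewrite irr | move=> _; lia].
- by apply/imsetP; exists (@Ordinal 3 0 isT).
- by apply/imsetP; exists (@Ordinal 3 1 isT).
- by apply/imsetP; exists (@Ordinal 3 2 isT).
Qed.

Lemma clique_block (n : nat) (T : finType) (e : rel T) (F : {set {set T}}) :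
  symmetric e -> irreflexive e -> (exists x : T, true) ->
  (forall x : T, exists2 K, K \in F & x \in K) ->
  (forall x y, e x y -> exists2 K, K \in F & (x \in K) && (y \in K)) ->
  (forall K1 K2, K1 \in F -> K2 \in F -> K1 != K2 -> #|K1 :&: K2| <= 1) ->
  (forall C, induced_cycle e C -> exists2 K, K \in F & C \subset K) ->
  forall Q, clique e Q -> exists2 K, K \in F & Q \subset K.
Proof.
move=> sym irr hT hcov hedge hint hcyc Q cq.
case: (set_0Vmem Q) => [->|[x xQ]].
  by case: hT => x _; case: (hcov x) => K KF _; exists K => //; exact: sub0set.
case: (boolP (Q \subset [set x])) => sub.
  case: (hcov x) => K KF xK; exists K => //; apply: subset_trans sub _.
  by rewrite sub1set.
case/subsetPn: sub => y yQ; rewrite inE => nyx.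
have exy : e x y by apply: cq => //; rewrite eq_sym.
case: (hedge _ _ exy) => K KF /andP[xK yK]; exists K => //.
apply/subsetP => z zQ.
case: (eqVneq z x) => [->//|nzx]; case: (eqVneq z y) => [->//|nzy].
have exz : e x z by apply: cq => //; rewrite eq_sym.
have eyz : e y z by apply: cq => //; rewrite eq_sym.
case: (triangle_in sym irr exy eyz exz) => C [cC xC yC zC].
case: (hcyc C cC) => K2 K2F CK2.
case: (eqVneq K2 K) => [<-|ne]; first by apply: (subsetP CK2).
have := hint _ _ K2F KF ne.
have : [set x; y] \subset K2 :&: K.
  by apply/subsetP => w; rewrite !inE => /orP[] /eqP ->; rewrite ?xK ?yK (subsetP CK2).
move/subset_leq_card; rewrite cards2 eq_sym nyx => h1 h2; by have := leq_trans h1 h2.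
Qed.

Definition TLF (n : nat) (T : finType) (e : rel T) (F : {set {set T}}) : Prop :=
  symmetric e /\ irreflexive e /\
    (forall x : T, exists2 K, K \in F & x \in K) /\
    (forall K, K \in F -> #|K| = n /\ clique e K) /\
    (forall x y, e x y -> exists2 K, K \in F & (x \in K) && (y \in K)) /\
    (forall K1 K2, K1 \in F -> K2 \in F -> K1 != K2 -> #|K1 :&: K2| <= 1) /\
    (forall C, induced_cycle e C -> exists2 K, K \in F & C \subset K).

Lemma tri_block n (T : finType) (e : rel T) F (x y z : T) K :
  TLF n e F -> e x y -> e y z -> e x z -> K \in F -> x \in K -> y \in K -> z \in K.
Proof.
case=> sym [irr [_ [_ [_ [hint hcyc]]]]] exy eyz exz KF xK yK.
have nxy : x != y by apply/eqP => h; move: exy; rewrite h irr.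
case: (triangle_in sym irr exy eyz exz) => C [cC xC yC zC].
case: (hcyc C cC) => K2 K2F CK2.
case: (eqVneq K2 K) => [<-|ne]; first by apply: (subsetP CK2).
have := hint _ _ K2F KF ne.
have : [set x; y] \subset K2 :&: K.
  by apply/subsetP => w; rewrite !inE => /orP[] /eqP ->; rewrite ?xK ?yK (subsetP CK2).
move/subset_leq_card; rewrite cards2 nxy => h1 h2; by have := leq_trans h1 h2.
Qed.

Definition walk (T : finType) (e : rel T) (B : {set T}) (w : nat -> T) (k : nat) :=
  (forall i, i <= k -> w i \in B) /\ (forall i, i < k -> e (w i) (w i.+1)).

Lemma walk_prefix (T : finType) (e : rel T) B w k i :
  walk e B w k -> i <= k -> walk e B w i.
Proof. case=> h1 h2 ik; split=> t ti; [apply: h1 | apply: h2]; lia. Qed.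

Lemma walk_suffix (T : finType) (e : rel T) B w k i :
  walk e B w k -> i <= k -> walk e B (fun t => w (t + i)) (k - i).
Proof.
case=> h1 h2 ik; split=> t ti; first by apply: h1; lia.
have -> : (t.+1 + i) = (t + i).+1 by lia.
by apply: h2; lia.
Qed.

Lemma walk_skip (T : finType) (e : rel T) B w k i d :
  walk e B w k -> i + d < k -> e (w i) (w (i + d).+1) ->
  walk e B (fun t => if t <= i then w t else w (t + d)) (k - d).
Proof.
case=> h1 h2 idk ed; split=> t ti.
  by case: ifP => _; apply: h1; lia.
case: (ltngtP t i) => [ti'|ti'|->].
- by apply: h2; lia.
- rewrite addSn; by apply: h2; lia.
- by rewrite addSn.
Qed.

Definition bw (T : finType) (e : rel T) (B : {set T}) (v : T) (w : nat -> T) (k : nat) :=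
  walk e B w k /\ [&& e v (w 0), e v (w k), w 0 != w k & ~~ e (w 0) (w k)].

Lemma no_bw n (T : finType) (e : rel T) (F : {set {set T}}) (B : {set T}) (v : T) :
  TLF n e F -> v \notin B -> forall k w, bw e B v w k -> False.
Proof.
move=> H vB; have H' := H; case: H' => sym [irr [hcov [hKF [hedge [hint hcyc]]]]].
elim/ltn_ind => k IH w [wk /and4P[ev0 evk n0k ne0k]].
have [wB wE] := wk.
have H1 : forall i j, i < j -> j <= k -> w i != w j.
  move=> i j ij jk; apply/negP => /eqP wij.
  case: (ltngtP j k) => [jk'|jk'|jk']; last first.
  + apply: (IH i _ w); first lia.
    split; first by apply: walk_prefix wk _; lia.
    by rewrite wij jk' ev0 evk n0k ne0k.
  + lia.
  + apply: (IH (k - (j - i)) _ (fun t => if t <= i then w t else w (t + (j - i)))); first lia.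
    split.
      apply: walk_skip => //; first lia.
      have -> : i + (j - i) = j by lia.
      by rewrite wij; apply: wE.
    have -> : (k - (j - i) <= i) = false by lia.
    have -> : k - (j - i) + (j - i) = k by lia.
    by rewrite /= ev0 evk n0k ne0k.
have H2 : forall i j, i.+1 < j -> j <= k -> ~~ e (w i) (w j).
  move=> i j ij jk; apply/negP => eij.
  apply: (IH (k - (j - i.+1)) _ (fun t => if t <= i then w t else w (t + (j - i.+1)))); first lia.
  split.
    apply: walk_skip => //; first lia.
    by have -> : (i + (j - i.+1)).+1 = j by lia.
  have -> : (k - (j - i.+1) <= i) = false by lia.
  have -> : k - (j - i.+1) + (j - i.+1) = k by lia.
  by rewrite /= ev0 evk n0k ne0k.
case: (boolP [exists t : 'I_k, (0 < t) && e v (w t)]).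
  case/existsP => [[t tk]] /= /andP [t0 evt].
  have e0t : e (w 0) (w t).
    apply/negPn/negP => ne; apply: (IH t tk w).
    split; first by apply: walk_prefix wk _; lia.
    rewrite ev0 evt ne andbT H1 //; lia.
  have etk : e (w t) (w k).
    apply/negPn/negP => ne; apply: (IH (k - t) _ (fun s => w (s + t))); first lia.
    split; first by apply: walk_suffix wk _; lia.
    rewrite /= add0n subnK; last lia.
    rewrite evt evk ne andbT H1 //; lia.
  have t1 : t = 1.
    have : ~~ (1 < t).
      apply/negP => l; have tk' : t <= k by lia.
      by have := H2 0 t l tk'; rewrite e0t.
    lia.
  have k2 : k = 2.
    have : ~~ (t.+1 < k).
      apply/negP => l.
      by have := H2 t k l (leqnn k); rewrite etk.
    lia.
  subst t k.
  case: (hedge _ _ evt) => K KF /andP [vK w1K].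
  have w0K : w 0 \in K by apply: (tri_block H evt _ ev0 KF vK w1K); rewrite sym.
  have w2K : w 2 \in K by apply: (tri_block H evt etk evk KF vK w1K).
  case: (hKF K KF) => _ cl.
  by rewrite (cl _ _ w0K w2K n0k) in ne0k.
rewrite negb_exists => /forallP nint.
have nint' : forall t, 0 < t -> t < k -> ~~ e v (w t).
  by move=> t t0 tk; have := nint (Ordinal tk); rewrite /= t0.
have k2 : 1 < k.
  have : k != 0 by apply/eqP => k0; move: n0k; rewrite k0 eqxx.
  have : k != 1.
    apply/eqP => k1; move: ne0k; have := wE 0; rewrite k1 => -> //.
  lia.
pose c t := if t == 0 then v else w t.-1.
have cyc : induced_cycle e [set c (nat_of_ord i) | i : 'I_k.+2].
  apply: cycle_induced => //; first lia.
  - move=> i j im jm; rewrite /c; case: eqP => [i0|i0]; case: eqP => [j0|j0].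
    + by move=> _; lia.
    + move=> h; exfalso; move: vB; rewrite h wB //; lia.
    + move=> h; exfalso; move: vB; rewrite -h wB //; lia.
    + move=> h; case: (ltngtP i.-1 j.-1) => [l|l|l]; last lia.
      * by move: (H1 _ _ l (ltac:(lia))); rewrite h eqxx.
      * by move: (H1 _ _ l (ltac:(lia))); rewrite h eqxx.
  - move=> i im; rewrite /c /=; case: i im => [//|i] im /=.
    by apply: wE; lia.
  - by rewrite /c /= sym.
  - move=> i j im jm; rewrite /c.
    case: i im => [|i] im; case: j jm => [|j] jm /=.
    + by rewrite irr.
    + move=> h; have : (j == 0) || (j == k).
        apply/negPn/negP; rewrite negb_or => /andP [a b].
        by move: h; rewrite (negbTE (nint' j _ _)) //; lia.
      lia.
    + rewrite sym => h; have : (i == 0) || (i == k).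
        apply/negPn/negP; rewrite negb_or => /andP [a b].
        by move: h; rewrite (negbTE (nint' i _ _)) //; lia.
      lia.
    + move=> h.
      case: (eqVneq i j) => [ij|ij]; first by move: h; rewrite ij irr.
      have a1 : ~~ (i.+1 < j).
        apply/negP => l; have jk : j <= k by lia.
        by have := H2 i j l jk; rewrite h.
      have a2 : ~~ (j.+1 < i).
        apply/negP => l; have ik : i <= k by lia.
        by have := H2 j i l ik; rewrite sym h.
      lia.
case: (hcyc _ cyc) => K KF CK.
have w0K : w 0 \in K.
  apply: (subsetP CK); apply/imsetP; exists (@Ordinal k.+2 1 isT) => //.
have wkK : w k \in K.
  apply: (subsetP CK); apply/imsetP.
  have kk : k.+1 < k.+2 by [].
  by exists (Ordinal kk).
case: (hKF K KF) => _ cl.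
by rewrite (cl _ _ w0K wkK n0k) in ne0k.
Qed.

Lemma nbr_clique n (T : finType) (e : rel T) (F : {set {set T}}) (B : {set T}) (v a b : T) :
  TLF n e F -> induced_connected e B -> v \notin B -> a \in B -> b \in B ->
  e v a -> e v b -> a != b -> e a b.
Proof.
move=> H [_ conn] vB aB bB eva evb nab; apply/negPn/negP => neab.
case/connectP: (conn a b aB bB) => p /(pathP a) pth lst.
apply: (no_bw H vB (k := size p) (w := fun i => nth a (a :: p) i)).
split; last by rewrite /= -last_nth -lst eva evb nab neab.
split.
  case=> [|i] ip //=.
  by have := pth i ip; rewrite /induced_rel /= => /and3P [].
move=> i ip; have := pth i ip; rewrite /induced_rel /= => /and3P [] //.
Qed.

Lemma exit_edge (T : finType) (r : rel T) (B : {set T}) (p : seq T) (x : T) :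
  path r x p -> x \in B -> last x p \notin B ->
  exists y z, [/\ y \in B, z \notin B & r y z].
Proof.
elim: p x => [|z p IH] x /=; first by move=> _ ->.
case/andP => rxz pz xB lz.
case: (boolP (z \in B)) => zB; first exact: IH pz zB lz.
by exists x, z; split.
Qed.

Theorem lemma5p1 (n : nat) (T : finType) (e : rel T) :
  2 <= n -> Kn_treelike n e -> C_HH e.
Proof.
move=> n2 [[sym irr] [gc [F [hcov [hKF [hedge [hint hcyc]]]]]]].
have H : TLF n e F by split; [|split; [|split; [|split; [|split; [|split]]]]].
have hT : exists x : T, true by case/set0Pn: gc.1 => x _; exists x.
move=> A f cA hf.
have ext : forall m (B : {set T}) h, #|~: B| = m -> A \subset B ->
    induced_connected e B -> hom_on e B h -> {in A, forall x, h x = f x} ->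
    exists g, graph_hom e g /\ {in A, forall x, g x = f x}.
  elim/ltn_ind => m IH B h cm AB cB hh hA.
  case: (eqVneq B setT) => [BT|BT].
    by exists h; split => // x y exy; apply: hh; rewrite // BT inE.
  have [v [b [bB vB ebv]]] : exists v b, [/\ b \in B, v \notin B & e b v].
    case/set0Pn: cB.1 => b0 b0B.
    have /subsetPn [u _ uB] : ~~ ([set: T] \subset B) by rewrite subTset.
    case/connectP: (gc.2 b0 u (in_setT _) (in_setT _)) => p pth lst.
    have pth' : path e b0 p.
      by apply: sub_path pth => x y /and3P [].
    case: (exit_edge pth' b0B (ltac:(by rewrite -lst))) => y [z [yB zB eyz]].
    by exists z, y.
  have evb : e v b by rewrite sym.
  set N := [set a in B | e v a].
  have NB : forall a, a \in N -> a \in B /\ e v a by move=> a; rewrite inE => /andP.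
  have Ncl : forall a1 a2, a1 \in N -> a2 \in N -> a1 != a2 -> e a1 a2.
    move=> a1 a2 /(NB _) [a1B e1] /(NB _) [a2B e2] ne.
    exact: (nbr_clique H cB vB a1B a2B e1 e2 ne).
  have vN : v \notin N by rewrite inE (negbTE vB).
  have Nn : #|N| < n.
    have cl : clique e (v |: N).
      move=> x y; rewrite !in_setU1 => /orP [/eqP ->|xN] /orP [/eqP ->|yN] nxy.
      - by rewrite eqxx in nxy.
      - by case: (NB _ yN).
      - by rewrite sym; case: (NB _ xN).
      - exact: Ncl.
    case: (clique_block n sym irr hT hcov hedge hint hcyc cl) => K KF sub.
    have := subset_leq_card sub; rewrite cardsU1 vN (proj1 (hKF K KF)) /=.
    by [].
  set Q := h @: N.
  have Qcl : clique e Q.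
    move=> q1 q2 /imsetP [a1 a1N ->] /imsetP [a2 a2N ->] nq.
    have na : a1 != a2 by apply: contraNneq nq => ->.
    by apply: hh; [case: (NB _ a1N)|case: (NB _ a2N)|apply: Ncl].
  case: (clique_block n sym irr hT hcov hedge hint hcyc Qcl) => K KF QK.
  have [Kn Kcl] := hKF K KF.
  have /subsetPn [y0 y0K y0Q] : ~~ (K \subset Q).
    apply/negP => /subset_leq_card; rewrite Kn.
    have := leq_imset_card h N; rewrite -/Q; lia.
  have y0adj : forall a, a \in N -> e y0 (h a).
    move=> a aN; have hQ : h a \in Q by apply: imset_f.
    apply: Kcl => //; first by apply: (subsetP QK).
    by apply: contraNneq y0Q => ->.
  pose h' x := if x == v then y0 else h x.
  apply: (IH #|~: (v |: B)| _ (v |: B) h') => //.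
  - rewrite -cm; apply: proper_card; apply/properP; split.
      by apply/subsetP => x; rewrite !inE negb_or => /andP [].
    by exists v; rewrite !inE ?eqxx.
  - exact: subset_trans AB (subsetUr _ _).
  - split; first by apply/set0Pn; exists v; rewrite !inE eqxx.
    have mono : forall x y, connect (induced_rel e B) x y -> connect (induced_rel e (v |: B)) x y.
      move=> x y; apply: connect_sub => x1 y1 /and3P [x1B y1B exy]; apply: connect1.
      by rewrite /induced_rel /= !inE x1B y1B exy !orbT.
    have cb : forall x, x \in v |: B -> connect (induced_rel e (v |: B)) x b.
      move=> x; rewrite !inE => /orP [/eqP ->|xB].
        by apply: connect1; rewrite /induced_rel /= !inE eqxx bB evb orbT.
      by apply: mono; apply: cB.2.
    have bc : forall x, x \in v |: B -> connect (induced_rel e (v |: B)) b x.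
      move=> x; rewrite !inE => /orP [/eqP ->|xB].
        by apply: connect1; rewrite /induced_rel /= !inE eqxx bB ebv orbT.
      by apply: mono; apply: cB.2.
    by move=> x y xB' yB'; apply: connect_trans (cb x xB') (bc y yB').
  - move=> x y; rewrite /h' !inE => /orP [/eqP ->|xB] /orP [/eqP ->|yB] exy.
    + by rewrite irr in exy.
    + have yv : (y == v) = false by apply: contraNF vB => /eqP <-.
      rewrite eqxx yv; apply: y0adj; by rewrite inE yB exy.
    + have xv : (x == v) = false by apply: contraNF vB => /eqP <-.
      rewrite eqxx xv sym; apply: y0adj; by rewrite inE xB sym.
    + have yv : (y == v) = false by apply: contraNF vB => /eqP <-.
      have xv : (x == v) = false by apply: contraNF vB => /eqP <-.
      by rewrite xv yv; apply: hh.
  - move=> x xA; rewrite /h'.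
    have xv : (x == v) = false by apply: contraNF vB => /eqP <-; apply: (subsetP AB).
    by rewrite xv hA.
by apply: (ext _ A f erefl (subxx A) cA hf).
Qed.
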